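(* Let $N\ge1$, let $(\mathbf s^0,\dots,\mathbf s^{N-1})$ be an $(N,1,\mathbb L)$-$N$-CO-SF where $\mathbf s^m$ has length $l^{(m)}N$, and let $\mathbf U=[u^n_k]$ be an $N\times N$ unitary-like matrix with rows $\mathbf u^0,\dots,\mathbf u^{N-1}$. For $0\le m,n<N$ define the sequence $\mathbf c^m_n$ of length $l^{(m)}N$ by $$c^m_n(k)=u^n_{[k]_N}\,s^m(k),\qquad 0\le k<l^{(m)}N$$ (equivalently $\mathbf c^m_n=\mathbf u^n\odot\mathbb S^{(m)}$, where $\mathbb S^{(m)}$ is the set of the $l^{(m)}N$ length-one sequences $(s^m(k))$, $0\le k<l^{(m)}N$). Then, with $\mathbb C^m=(\mathbf c^m_0,\dots,\mathbf c^m_{N-1})$, the family $(\mathbb C^0,\dots,\mathbb C^{N-1})$ is an $(N,N,\mathbb L)$-CCC.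
   Context: All sequences are finite complex sequences. A sequence $\mathbf s=(s_0,\dots,s_{L-1})$ of length $L$ is identified with the function $s:\mathbb Z\to\mathbb C$ given by $s(n)=s_n$ for $0\le n<L$ and $s(n)=0$ otherwise. $[a]_b$ denotes the remainder of $a$ modulo $b$. For sequences $\mathbf s,\mathbf s'$ of lengths $L,L'$ (possibly different), the aperiodic correlation is $R_{\mathbf s,\mathbf s'}(\tau)=\sum_{l=0}^{L-1}s(l)\,\overline{s'(l+\tau)}$ for $\tau\in\mathbb Z$. The energy of $\mathbf s$ is $E_{\mathbf s}=R_{\mathbf s,\mathbf s}(0)$. An $(M,1,\mathbb L)$-$N$-shift cross-orthogonal sequence family ($N$-CO-SF) is an indexed family $(\mathbf s^0,\dots,\mathbf s^{M-1})$ of complex sequences, where $\mathbf s^m$ has length $L^{(m)}$ divisible by $N$, and $\mathbb L$ is the set of distinct values among $L^{(0)},\dots,L^{(M-1)}$, such that for all $0\le m,m'<M$ and all $k\in\mathbb Z$, $R_{\mathbf s^m,\mathbf s^{m'}}(kN)=E_{\mathbf s^m}\,\delta(m-m')\,\delta(k)$, where $\delta$ is the Kronecker delta. An $n\times n$ complex matrix $\mathbf U$ is unitary-like if $\mathbf U\mathbf U^H=\mathbf U^H\mathbf U=\alpha\mathbf I_n$ for some real $\alpha>0$. An $(N,L)$-sequence set is an indexed set $\mathbb S=(\mathbf s_0,\dots,\mathbf s_{N-1})$ of $N$ sequences of common length $L$. For an $(N,L)$-sequence set $\mathbb S$ and an $(N,L')$-sequence set $\mathbb S'=(\mathbf s'_0,\dots,\mathbf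 s'_{N-1})$, the correlation sum is $\mathcal R_{\mathbb S,\mathbb S'}(\tau)=\sum_{n=0}^{N-1}R_{\mathbf s_n,\mathbf s'_n}(\tau)$, and the energy of $\mathbb S$ is $E_{\mathbb S}=\mathcal R_{\mathbb S,\mathbb S}(0)$. An $(M,N,\mathbb L)$-complete complementary code (CCC) is an indexed family $(\mathbb C^0,\dots,\mathbb C^{M-1})$ where $\mathbb C^m=(\mathbf c^m_0,\dots,\mathbf c^m_{N-1})$ is an $(N,L^{(m)})$-sequence set, $\mathbb L$ is the set of distinct values among the $L^{(m)}$, and for all $0\le m,m'<M$ and all $\tau\in\mathbb Z$, $\mathcal R_{\mathbb C^m,\mathbb C^{m'}}(\tau)=E_{\mathbb C^m}\,\delta(m-m')\,\delta(\tau)$. *)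

(* Defs.v *)
From HB Require Import structures.
From mathcomp Require Import all_boot all_order all_algebra.
Set Implicit Arguments. Unset Strict Implicit. Unset Printing Implicit Defensive.
Import Order.TTheory GRing.Theory Num.Theory.
Local Open Scope ring_scope.

Section Seqs.
Variable C : numClosedFieldType.

(* A finite sequence s : seq C viewed as a function Z -> C, zero outside [0, size s). *)
Definition seqval (s : seq C) (n : int) : C :=
  match n with Posz k => nth 0 s k | Negz _ => 0 end.

Definition corr (s s' : seq C) (tau : int) : C :=
  \sum_(l < size s) seqval s (Posz l) * (seqval s' (Posz l + tau))^*.

Definition energy (s : seq C) : C := corr s s 0.

Definition is_NCO_SF (N M : nat) (S : 'I_M -> seq C) : Prop :=
  (forall m, (N %| size (S m))%N) /\
  forall (m m' : 'I_M) (k : int),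
    corr (S m) (S m') (k * (Posz N)) =
      energy (S m) * (m == m')%:R * (k == 0)%:R.

Definition adjmx (m n : nat) (U : 'M[C]_(m, n)) : 'M[C]_(n, m) := (map_mx Num.conj U)^T.

Definition unitary_like (n : nat) (U : 'M[C]_n) : Prop :=
  exists alpha : C, alpha \is Num.real /\ 0 < alpha /\
    U *m adjmx U = alpha%:M /\ adjmx U *m U = alpha%:M.

Definition corr_sum (N : nat) (S S' : 'I_N -> seq C) (tau : int) : C :=
  \sum_(n < N) corr (S n) (S' n) tau.

Definition energy_set (N : nat) (S : 'I_N -> seq C) : C := corr_sum S S 0.

Definition is_CCC (M N : nat) (F : 'I_M -> 'I_N -> seq C) : Prop :=
  (forall m (n n' : 'I_N), size (F m n) = size (F m n')) /\
  forall (m m' : 'I_M) (tau : int),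
    corr_sum (F m) (F m') tau =
      energy_set (F m) * (m == m')%:R * (tau == 0)%:R.

Definition modulate (N : nat) (HN : (0 < N)%N) (U : 'M[C]_N) (n : 'I_N)
  (s : seq C) : seq C :=
  mkseq (fun k => U n (Ordinal (ltn_pmod k HN)) * nth 0 s k) (size s).

End Seqs.

(* Main.v *)
Require Import Defs.
From HB Require Import structures.
From mathcomp Require Import all_boot all_order all_algebra.
Import Order.TTheory GRing.Theory Num.Theory.
Local Open Scope ring_scope.

Lemma seqval_mod (C : numClosedFieldType) (N : nat) (HN : (0 < N)%N)
  (U : 'M[C]_N) n s (k : nat) :
  seqval (modulate HN U n s) (Posz k) =
  U n (Ordinal (ltn_pmod k HN)) * seqval s (Posz k).
Proof.
rewrite /= /modulate.
case: (ltnP k (size s)) => Hk; first by rewrite nth_mkseq.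
by rewrite !nth_default ?mulr0 ?size_mkseq.
Qed.

Lemma modeq_dvd (N : nat) (HN : (0 < N)%N) (l j : nat) (tau : int) :
  Posz l + tau = Posz j ->
  (Ordinal (ltn_pmod j HN) == Ordinal (ltn_pmod l HN)) = (Posz N %| tau)%Z.
Proof.
move=> E.
have -> : tau = Posz j - Posz l by rewrite -E addrC addKr.
rewrite -eqz_mod_dvd !modz_nat.
apply/eqP/eqP => [[->]//|[]] h; apply/val_inj => /=; exact h.
Qed.

Lemma term_sum (C : numClosedFieldType) (N : nat) (HN : (0 < N)%N)
  (U : 'M[C]_N) (alpha : C) (HU : adjmx U *m U = alpha%:M) s s' (l : nat) (tau : int) :
  \sum_(n < N) seqval (modulate HN U n s) (Posz l) *
      (seqval (modulate HN U n s') (Posz l + tau))^* =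
  alpha * ((Posz N %| tau)%Z)%:R * (seqval s (Posz l) * (seqval s' (Posz l + tau))^*).
Proof.
case E: (Posz l + tau) => [j|j]; last first.
  have c0 : (0:C)^* = 0 := conjC0 C.
  by rewrite /= c0 !mulr0 big1 // => n _; rewrite mulr0.
under eq_bigr => n _ do rewrite !seqval_mod rmorphM /= mulrACA [U n _ * _]mulrC.
rewrite -mulr_suml.
have -> : \sum_(i < N) (U i (Ordinal (ltn_pmod j HN)))^* * U i (Ordinal (ltn_pmod l HN))
   = (adjmx U *m U) (Ordinal (ltn_pmod j HN)) (Ordinal (ltn_pmod l HN)).
  by rewrite !mxE; apply: eq_bigr => i _; rewrite !mxE.
by rewrite HU mxE (@modeq_dvd N HN l j tau E) mulr_natr.
Qed.

Lemma corr_sum_eq (C : numClosedFieldType) (N : nat) (HN : (0 < N)%N)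
  (U : 'M[C]_N) (alpha : C) (HU : adjmx U *m U = alpha%:M) s s' (tau : int) :
  corr_sum (fun n : 'I_N => modulate HN U n s) (fun n => modulate HN U n s') tau =
  alpha * ((Posz N %| tau)%Z)%:R * corr s s' tau.
Proof.
rewrite /corr_sum /corr.
under eq_bigr => n _ do rewrite {1}/modulate size_mkseq.
rewrite exchange_big /= mulr_sumr.
by apply: eq_bigr => l _; rewrite (@term_sum C N HN U alpha HU).
Qed.

Theorem theorem5 (C : numClosedFieldType) (N : nat) (HN : (0 < N)%N)
  (S : 'I_N -> seq C) (U : 'M[C]_N) :
  is_NCO_SF N S -> unitary_like U ->
  is_CCC (fun (m : 'I_N) (n : 'I_N) => modulate HN U n (S m)).
Proof.
move=> [_ HS] [alpha [_ [_ [_ HU]]]].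
split; first by move=> m n n'; rewrite /modulate !size_mkseq.
move=> m m' tau.
rewrite /energy_set !(@corr_sum_eq C N HN U alpha HU) dvdz0 mulr1.
case: (boolP (Posz N %| tau)%Z) => Hd; last first.
  have -> : (tau == 0) = false.
    by apply/negbTE; apply: contra Hd => /eqP ->; rewrite dvdz0.
  by rewrite !mulr0 mul0r.
rewrite mulr1.
have Et : tau = (tau %/ Posz N)%Z * Posz N by rewrite divzK.
rewrite Et HS mulrA /energy.
have -> : ((tau %/ N)%Z == 0) = ((tau %/ N)%Z * N == 0).
  have HN0 : (Posz N == 0) = false by apply/negbTE; rewrite -lt0n.
  by rewrite mulf_eq0 HN0 orbF.
by rewrite !mulrA.
Qed.
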